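(* Let $P_X$ and an $M$-type distribution $P_{\hat X}$ be defined on the same discrete alphabet $\mathcal{X}$. Then for every $\gamma>0$ and $a>0$, $$E_\gamma(P_{\hat X}\|P_X)\ge1-\gamma\,\mathbb{P}\big[\imath_X(X)<\log(\gamma M)+a\big]-\exp(-a),$$ where $X\sim P_X$.
   Context: A distribution on a discrete set is an $M$-type if all its probabilities are integer multiples of $1/M$. $\imath_X(x):=\log\frac1{P_X(x)}$. $E_\gamma(P\|Q):=\sup_{\mathcal{A}}\{P(\mathcal{A})-\gamma Q(\mathcal{A})\}$. *)

(* Defs.v *)
From Stdlib Require Import Reals.
Open Scope R_scope.

(* Discrete alphabet: (an enumeration of) a countable set, modelled as nat.
   A distribution is a pmf p : nat -> R, nonnegative, summing to 1. *)
Definition is_distr (p : nat -> R) : Prop :=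
  (forall x, 0 <= p x) /\ infinite_sum p 1.

Definition M_type (M : nat) (p : nat -> R) : Prop :=
  forall x, exists k : nat, p x = INR k / INR M.

Definition prob_is (p : nat -> R) (A : nat -> bool) (v : R) : Prop :=
  infinite_sum (fun x => if A x then p x else 0) v.

Definition Egamma_is (gamma : R) (P Q : nat -> R) (E : R) : Prop :=
  is_lub (fun r => exists (A : nat -> bool) (vP vQ : R),
             prob_is P A vP /\ prob_is Q A vQ /\ r = vP - gamma * vQ) E.

(* information density i_X(x) = log (1 / P_X(x)) (natural log; +infinity if
   P_X(x) = 0).  The event { x | i_X(x) < t }. *)
Definition info_lt (p : nat -> R) (t : R) : nat -> bool :=
  fun x => if Rlt_dec 0 (p x) then
             (if Rlt_dec (ln (/ p x)) t then true else false)
           else false.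

(* Main.v *)
Require Import Defs.
From Stdlib Require Import Reals Lra Lia.
Open Scope R_scope.

Lemma cst_cv (c : R) : Un_cv (fun _ => c) c.
Proof. intros e He; exists 0%nat; intros; unfold R_dist; rewrite Rminus_diag, Rabs_R0; lra. Qed.

Lemma mask_sum_ex (p : nat -> R) (A : nat -> bool) :
  is_distr p -> exists v, prob_is p A v.
Proof.
  intros [Hp Hs].
  assert (Hg : Un_growing (sum_f_R0 p)).
  { intro n; simpl; specialize (Hp (S n)); lra. }
  assert (Hle : forall n, sum_f_R0 (fun x => if A x then p x else 0) n <= sum_f_R0 p n).
  { induction n; simpl.
    - destruct (A 0%nat); specialize (Hp 0%nat); lra.
    - destruct (A (S n)); specialize (Hp (S n)); lra. }
  assert (Hb : bound (EUn (sum_f_R0 (fun x => if A x then p x else 0)))).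
  { exists 1; intros r [n ->]. eapply Rle_trans; [apply Hle|].
    apply (growing_ineq _ _ Hg Hs). }
  assert (Hg2 : Un_growing (sum_f_R0 (fun x => if A x then p x else 0))).
  { intro n; simpl; destruct (A (S n)); specialize (Hp (S n)); lra. }
  destruct (growing_cv _ Hg2 Hb) as [v Hv]. exists v; exact Hv.
Qed.

Theorem mainTheorem6 (PX PXh : nat -> R) (M : nat) (gamma a : R) :
  is_distr PX -> is_distr PXh -> (0 < M)%nat -> M_type M PXh ->
  0 < gamma -> 0 < a ->
  forall E prb : R,
    Egamma_is gamma PXh PX E ->
    prob_is PX (info_lt PX (ln (gamma * INR M) + a)) prb ->
    E >= 1 - gamma * prb - exp (- a).
Proof.
  intros HX HXh HM HMt Hg Ha E prb [HE _] Hprb.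
  set (D := fun x => if Rlt_dec 0 (PXh x) then true else false).
  set (B := info_lt PX (ln (gamma * INR M) + a)).
  destruct (mask_sum_ex PX D HX) as [vQ HvQ].
  assert (HvP : prob_is PXh D 1).
  { destruct HXh as [Hp Hs]. unfold prob_is.
    intros e He; destruct (Hs e He) as [N HN]; exists N; intros n Hn.
    replace (sum_f_R0 (fun x => if D x then PXh x else 0) n) with (sum_f_R0 PXh n).
    - apply HN; exact Hn.
    - apply sum_eq; intros i _; unfold D; destruct (Rlt_dec 0 (PXh i)); auto.
      specialize (Hp i); lra. }
  assert (HMr : 0 < INR M) by (apply lt_0_INR; exact HM).
  assert (Hpt : forall x, gamma * (if D x then PX x else 0) <=
             gamma * (if B x then PX x else 0) + exp (-a) * PXh x).
  { intro x. destruct HX as [Hp _]. destruct HXh as [Hph _].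
    pose proof (Hp x); pose proof (Hph x). pose proof (exp_pos (-a)).
    unfold D, B, info_lt.
    destruct (Rlt_dec 0 (PXh x)) as [Hpos|Hpos].
    2:{ destruct (Rlt_dec 0 (PX x)); [destruct (Rlt_dec _ _)|]; nra. }
    destruct (Rlt_dec 0 (PX x)) as [Hq|Hq].
    2:{ assert (Hz : PX x = 0) by lra. rewrite Hz. destruct (Rlt_dec 0 0); [lra|]. rewrite Rmult_0_r, Rplus_0_l. apply Rmult_le_pos; lra. }
    destruct (Rlt_dec (ln (/ PX x)) (ln (gamma * INR M) + a)) as [Hl|Hl]; [nra|].
    assert (Hk : PXh x >= / INR M).
    { destruct (HMt x) as [k Hk]. rewrite Hk in Hpos |- *.
      destruct k. { simpl in Hpos; unfold Rdiv in Hpos; lra. }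
      assert (1 <= INR (S k)) by (apply (le_INR 1); lia).
      unfold Rdiv. apply Rle_ge. rewrite <- (Rmult_1_l (/ INR M)) at 1.
      apply Rmult_le_compat_r; [left; apply Rinv_0_lt_compat; lra| lra]. }
    apply Rnot_lt_le in Hl.
    assert (Hx : exp (ln (gamma * INR M) + a) <= / PX x).
    { rewrite <- (exp_ln (/ PX x)) by (apply Rinv_0_lt_compat; lra).
      destruct Hl as [Hl|Hl]; [left; apply exp_increasing; exact Hl| rewrite Hl; lra]. }
    rewrite exp_plus, exp_ln in Hx by nra.
    assert (Hea : exp a * exp (-a) = 1) by (rewrite <- exp_plus; replace (a + -a) with 0 by ring; apply exp_0).
    assert (gamma * INR M * exp a * PX x <= 1).
    { apply (Rmult_le_compat_r (PX x)) in Hx; [|lra].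
      rewrite Rinv_l in Hx by lra. exact Hx. }
    assert (gamma * PX x * INR M <= exp (-a)).
    { assert (Hea' : exp (-a) * (gamma * INR M * exp a * PX x) = gamma * PX x * INR M) by
        (transitivity ((exp a * exp (-a)) * (gamma * PX x * INR M)); [ring| rewrite Hea; ring]).
      rewrite <- Hea'. pose proof (exp_pos (-a)). nra. }
    assert (exp (-a) * / INR M <= exp (-a) * PXh x) by (pose proof (exp_pos (-a)); nra).
    assert (gamma * PX x <= exp (-a) * / INR M).
    { apply (Rmult_le_reg_r (INR M)); [lra|].
      replace (exp (-a) * / INR M * INR M) with (exp (-a)) by (field; lra). lra. }
    nra. }
  assert (Hineq : gamma * vQ <= gamma * prb + exp (-a) * 1).
  { apply (Rle_cv_lim (Un := fun n => gamma * sum_f_R0 (fun x => if D x then PX x else 0) n)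
       (Vn := fun n => gamma * sum_f_R0 (fun x => if B x then PX x else 0) n + exp (-a) * sum_f_R0 PXh n)).
    - induction n; simpl.
      + apply Hpt.
      + pose proof (Hpt (S n)). nra.
    - apply CV_mult; [apply cst_cv| exact HvQ].
    - apply CV_plus; apply CV_mult; try apply cst_cv.
      + exact Hprb.
      + destruct HXh; assumption. }
  assert (1 - gamma * vQ <= E).
  { apply HE. exists D, 1, vQ. repeat split; auto. }
  lra.
Qed.
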